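(* Let $L$ and $L_0$ be finite lattices and let $\phi: L\to L_0$ be a lattice epimorphism (surjective lattice homomorphism). For $y\in L_0$ let $\sigma(y):=\bigwedge\{x\in L:\ \phi(x)=y\}$ be its smallest pre-image. Fix a nonzero element $v\in L$ with $v=\sigma(\phi(v))$, and let $v/w$ be any prime quotient of $L$ (i.e. $w\prec v$). Let $r/s$ be a prime quotient of $L_0$ which is projective to the quotient $\phi(v)/\phi(w)$. Put $\underline{r}:=\sigma(r)$ and $\underline{s}:=\bigvee\{u\in L:\ u\le \underline{r},\ \phi(u)\le s\}$. Then $\underline{r}/\underline{s}$ is a prime quotient of $L$ and it is projective to $v/w$.
   Context: A quotient $a/b$ in a lattice is a pair with $b\le a$; it is prime if $b\prec a$ ($a$ covers $b$). A quotient $a/b$ transposes up to $c/d$ (and $c/d$ transposes down to $a/b$) if $a\wedge d=b$ and $a\vee d=c$; two quotients are transposed if one transposes up or down to the other. Two quotients are projective if they are connected by a finite sequence of quotients in which consecutive members are transposed. *)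

(* Defs.v *)
From HB Require Import structures.
From mathcomp Require Import all_boot all_order.
Set Implicit Arguments. Unset Strict Implicit. Unset Printing Implicit Defensive.
Import Order.Theory.
Local Open Scope order_scope.

(* A quotient a/b is represented by the pair (a, b). *)

Definition covers {d : Order.disp_t} {T : porderType d} (b a : T) : Prop :=
  b < a /\ forall c : T, b <= c -> c <= a -> c = b \/ c = a.

Definition prime_quotient {d : Order.disp_t} {T : porderType d} (q : T * T) : Prop :=
  covers q.2 q.1.

Definition transposes_up {d : Order.disp_t} {T : latticeType d} (q q' : T * T) : Prop :=
  (q.1 `&` q'.2 = q.2) /\ (q.1 `|` q'.2 = q'.1).

Definition transposed {d : Order.disp_t} {T : latticeType d} (q q' : T * T) : Prop :=
  transposes_up q q' \/ transposes_up q' q.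

Inductive projective {d : Order.disp_t} {T : latticeType d} : T * T -> T * T -> Prop :=
  | proj_refl q : projective q q
  | proj_step q q' q'' : transposed q q' -> projective q' q'' -> projective q q''.

Definition lattice_morphism {d : Order.disp_t} {T : latticeType d}
  {d0 : Order.disp_t} {T0 : latticeType d0} (phi : T -> T0) : Prop :=
  (forall x y, phi (x `&` y) = phi x `&` phi y) /\
  (forall x y, phi (x `|` y) = phi x `|` phi y).

Definition sigma {d : Order.disp_t} {L : finTBLatticeType d}
  {d0 : Order.disp_t} {L0 : finTBLatticeType d0} (phi : L -> L0) (y : L0) : L :=
  \meet_(x | phi x == y) x.

(* Main.v *)
Require Import Defs.
From HB Require Import structures.
From mathcomp Require Import all_boot all_order.
Import Order.Theory.
Local Open Scope order_scope.
Set Implicit Arguments. Unset Strict Implicit.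

Section Aux.
Context (d : Order.disp_t) (L : finTBLatticeType d)
  (d0 : Order.disp_t) (L0 : finTBLatticeType d0) (phi : L -> L0)
  (hm : lattice_morphism phi) (hs : forall y : L0, exists x : L, phi x = y).

Lemma phiI x y : phi (x `&` y) = phi x `&` phi y. Proof. exact: hm.1. Qed.
Lemma phiU x y : phi (x `|` y) = phi x `|` phi y. Proof. exact: hm.2. Qed.

Lemma phi_mono x y : x <= y -> phi x <= phi y.
Proof. by move=> xy; rewrite -(join_r xy) phiU leUl. Qed.

Lemma phi_bot : phi \bot = \bot.
Proof.
have [x hx] := hs \bot; apply/le_anti; rewrite le0x andbT -hx.
exact/phi_mono/le0x.
Qed.

Lemma sig_min x y : phi x = y -> sigma phi y <= x.
Proof. by move=> h; rewrite /sigma; apply: meets_inf; rewrite h. Qed.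

Lemma sig_pre y : phi (sigma phi y) = y.
Proof.
have [x hx] := hs y.
have : sigma phi y = \top \/ phi (sigma phi y) = y.
  rewrite /sigma; apply: (big_ind (fun m => m = \top \/ phi m = y)).
  - by left.
  - move=> m1 m2 [->|h1] [->|h2]; rewrite ?meetx1 ?meet1x; auto.
    by right; rewrite phiI h1 h2 meetxx.
  - by move=> i /eqP; right.
case=> // htop.
have : sigma phi y <= x by exact: sig_min.
by rewrite htop le1x => /eqP hxt; rewrite -hx hxt.
Qed.

Lemma sig_mono y z : y <= z -> sigma phi y <= sigma phi z.
Proof.
move=> yz; apply: (@le_trans _ _ (sigma phi y `&` sigma phi z)); last exact: leIr.
by apply: sig_min; rewrite phiI !sig_pre; apply/meet_l.
Qed.

Definition J (A : L) (b : L0) := \join_(u | (u <= A) && (phi u <= b)) u.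

Lemma J_le A b : J A b <= A.
Proof. by apply/joinsP => i /andP[]. Qed.

Lemma J_phi A b : phi (J A b) <= b.
Proof.
rewrite /J; apply: (big_ind (fun x => phi x <= b)).
- by rewrite phi_bot le0x.
- by move=> x y hx hy; rewrite phiU leUx hx hy.
- by move=> i /andP[].
Qed.

Lemma J_ge A b u : u <= A -> phi u <= b -> u <= J A b.
Proof. by move=> h1 h2; apply: joins_sup; rewrite h1 h2. Qed.

Lemma J_phi_eq a b : b <= a -> phi (J (sigma phi a) b) = b.
Proof.
move=> ba; apply/le_anti; rewrite J_phi /=.
rewrite -{1}(sig_pre b); apply: phi_mono; apply: J_ge.
  exact: sig_mono.
by rewrite sig_pre.
Qed.

Definition lift (q : L0 * L0) : L * L := (sigma phi q.1, J (sigma phi q.1) q.2).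

Lemma lift_tr q q' : transposes_up q q' -> transposes_up (lift q) (lift q').
Proof.
case: q q' => a b [c e] [/= H1 H2]; rewrite /lift /transposes_up /=.
have ac : a <= c by rewrite -H2 leUl.
have ec : e <= c by rewrite -H2 leUr.
have ba : b <= a by rewrite -H1 leIl.
have be : b <= e by rewrite -H1 leIr.
have AC := sig_mono ac.
have pD := J_phi_eq ec.
split.
- apply/le_anti/andP; split.
    apply: J_ge; first exact: leIl.
    by rewrite phiI pD sig_pre H1.
  rewrite lexI J_le /=; apply: J_ge; first exact: le_trans (J_le _ _) AC.
  exact: le_trans (J_phi _ _) be.
- apply/le_anti/andP; split.
    by rewrite leUx AC J_le.
  by apply: sig_min; rewrite phiU pD sig_pre.
Qed.

Lemma lift_proj q q' : projective q q' -> projective (lift q) (lift q').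
Proof.
elim=> [p|p p' p'' ht _ IH]; first exact: proj_refl.
apply: proj_step IH; case: ht => h; [left|right]; exact: lift_tr.
Qed.

End Aux.

Theorem lemma1 (d : Order.disp_t) (L : finTBLatticeType d)
  (d0 : Order.disp_t) (L0 : finTBLatticeType d0) (phi : L -> L0)
  (phi_morph : lattice_morphism phi) (phi_surj : forall y : L0, exists x : L, phi x = y)
  (v w : L) (v_nz : v != \bot) (v_sigma : v = sigma phi (phi v))
  (vw_prime : prime_quotient (v, w))
  (r s : L0) (rs_prime : prime_quotient (r, s))
  (rs_proj : projective (r, s) (phi v, phi w)) :
  let r_ := sigma phi r in
  let s_ := \join_(u | (u <= r_) && (phi u <= s)) u in
  prime_quotient (r_, s_) /\ projective (r_, s_) (v, w).
Proof.
move=> r_ s_.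
have hm := phi_morph; have hs := phi_surj.
case: vw_prime => /= wv vwc.
case: rs_prime => /= sr rsc.
split.
- rewrite /prime_quotient /covers /=.
  have s_r : s_ <= r_ by exact: J_le.
  have ps : phi s_ <= s by exact: J_phi.
  have pr : phi r_ = r by exact: sig_pre.
  split.
    rewrite lt_neqAle s_r andbT; apply/eqP => E.
    by move: ps; rewrite E pr => /(lt_le_trans sr); rewrite ltxx.
  move=> c h1 h2.
  have c1 : s <= phi c.
    rewrite -(J_phi_eq hm hs (ltW sr)); exact: phi_mono.
  have c2 : phi c <= r by rewrite -pr; exact: phi_mono.
  case: (rsc _ c1 c2) => hc.
    left; apply/le_anti; rewrite h1 andbT; apply: J_ge => //.
    by rewrite hc.
  right; apply/le_anti; rewrite h2 /=; exact: sig_min.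
- have E : lift phi (phi v, phi w) = (v, w).
    rewrite /lift /= -v_sigma; congr pair.
    have h1 : w <= J phi v (phi w) by apply: J_ge => //; exact: ltW.
    case: (vwc _ h1 (J_le _ _ _)) => // hJ.
    have : phi v <= phi w by rewrite -{1}hJ; exact: J_phi.
    move=> hle.
    have : v <= w.
      rewrite v_sigma; apply: sig_min; apply/le_anti.
      by rewrite hle phi_mono // ltW.
    by move/(lt_le_trans wv); rewrite ltxx.
  rewrite -E; exact: (lift_proj hm hs rs_proj).
Qed.
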